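(* Let $q$ be a self-join-free Boolean conjunctive query such that $q$ is saturated and the attack graph of $q$ contains no strong cycle. Let $\mathcal{S}$ be an initial strong component in the attack graph of $q$ with $|\mathcal{S}|\ge 2$. Then the M-graph of $q$ contains a cycle all of whose atoms belong to $\mathcal{S}$.
   Context: Every relation name has a signature $[n,k]$ ($1\le k\le n$; primary-key positions $1,\dots,k$) and a mode in $\{\mathsf{c},\mathsf{i}\}$. For an atom $F$, $\mathrm{key}(F)$ = variables at primary-key positions, $\mathrm{vars}(F)$ = all its variables. A self-join-free Boolean conjunctive query is a finite set of atoms with distinct relation names. $\mathcal{K}(p)=\{\mathrm{key}(F)\to\mathrm{vars}(F)\mid F\in p\}$ (FDs over variables); $q^{\mathsf{c}}$ = atoms of $q$ of mode $\mathsf{c}$; $F^{+,q}$ = variables $x$ with $\mathcal{K}(q\setminus\{F\})\cup\mathcal{K}(q^{\mathsf{c}})\models\mathrm{key}(F)\to x$. Attack graph: vertices atoms of $q$, edge $F\to G$ ($F\ne G$) iff there are atoms $F_0=F,\dots,F_\ell=G$ of $q$ and variables $x_i\in(\mathrm{vars}(F_{i-1})\cap\mathrm{vars}(F_i))\setminus F^{+,q}$. Attack weak if $\mathcal{K}(q)\models\mathrm{key}(F)\to\mathrm{key}(G)$, else strong; cycle strong if it contains a strong attack. A strong component is initial if no edge enters it from another strong component. $F$ attacks a variable $x$ if $F$ attacks $N(x)$ in $q\cup\{N(x)\}$ ($N$ fresh, signature $[1,1]$). A sequential proof for $\mathcal{K}(q)\models Z\to w$: atoms $F_1,\dots,F_\ell$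 of $q$ with $\mathrm{key}(F_i)\subseteq Z\cup\bigcup_{j<i}\mathrm{vars}(F_j)$ and $w\in\mathrm{vars}(F_k)$ for some $k$. $Z\to w$ is internal to $q$ if some such proof has no atom attacking a variable in $Z\cup\{w\}$, and $Z\subseteq\mathrm{vars}(F)$ for some $F\in q$. $q$ is saturated if $\mathcal{K}(q^{\mathsf{c}})\models\sigma$ for every $\sigma$ internal to $q$. The M-graph of $q$ has the atoms of $q$ as vertices and an edge $F\to G$ ($F\ne G$) iff $\mathcal{K}(q^{\mathsf{c}})\models\mathrm{vars}(F)\to\mathrm{key}(G)$. *)

(* Defs.v *)
From HB Require Import structures.
From mathcomp Require Import all_boot.
From Stdlib Require Import Relations.

Set Implicit Arguments.
Unset Strict Implicit.
Unset Printing Implicit Defensive.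

(* Variables are natural numbers.  A term is either a variable (inl x) or a
   constant (inr c). *)
Definition term := (nat + nat)%type.

Definition term_var (t : term) : option nat :=
  match t with inl x => Some x | inr _ => None end.

(* An atom R(t_1,...,t_n) of a relation name R with signature [n,k]:
   [rel] is the relation name, [keylen] = k, [args] = (t_1,...,t_n) (so
   n = size args), [is_c] is the mode of R (true = mode c, false = mode i). *)
Record atom := mkAtom { rel : nat; keylen : nat; args : seq term; is_c : bool }.

Definition atom_code (F : atom) := (rel F, keylen F, args F, is_c F).
Definition atom_decode (p : nat * nat * seq term * bool) :=
  let: (r, k, a, m) := p in mkAtom r k a m.
Lemma atom_codeK : cancel atom_code atom_decode. Proof. by case. Qed.
HB.instance Definition _ := Equality.copy atom (can_type atom_codeK).

Definition wf_atom (F : atom) : bool := (0 < keylen F) && (keylen F <= size (args F)).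

Definition key (F : atom) : seq nat := pmap term_var (take (keylen F) (args F)).
Definition vars (F : atom) : seq nat := pmap term_var (args F).

Definition query := seq atom.
Definition sjf_query (q : query) : bool := all wf_atom q && uniq (map rel q).

Definition fd := (seq nat * seq nat)%type.

Inductive fd_derives (Sigma : seq fd) (Z : seq nat) : nat -> Prop :=
| fdd_base x : x \in Z -> fd_derives Sigma Z x
| fdd_step X Y x : (X, Y) \in Sigma ->
    (forall y, y \in X -> fd_derives Sigma Z y) -> x \in Y -> fd_derives Sigma Z x.

Definition fd_implies (Sigma : seq fd) (Z W : seq nat) : Prop :=
  forall w, w \in W -> fd_derives Sigma Z w.

Definition K (p : query) : seq fd := [seq (key F, vars F) | F <- p].

Definition qc (q : query) : query := [seq F <- q | is_c F].

Definition plus (q : query) (F : atom) (x : nat) : Prop :=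
  fd_derives (K [seq G <- q | G != F] ++ K (qc q)) (key F) x.

Inductive attack_chain (q : query) (F : atom) : atom -> Prop :=
| ach_refl : attack_chain q F F
| ach_step G H x : attack_chain q F G -> H \in q ->
    x \in vars G -> x \in vars H -> ~ plus q F x -> attack_chain q F H.

Definition attacks (q : query) (F G : atom) : Prop :=
  [/\ F \in q, G \in q, F != G & attack_chain q F G].

Definition weak_attack (q : query) (F G : atom) : Prop :=
  attacks q F G /\ fd_implies (K q) (key F) (key G).

Definition strong_attack (q : query) (F G : atom) : Prop :=
  attacks q F G /\ ~ fd_implies (K q) (key F) (key G).

Definition dummy_atom := mkAtom 0 0 [::] false.

Definition is_cycle (E : atom -> atom -> Prop) (c : seq atom) : Prop :=
  0 < size c /\
  forall i, i < size c -> E (nth dummy_atom c i) (nth dummy_atom c (i.+1 %% size c)).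

Definition has_strong_cycle (q : query) : Prop :=
  exists c, is_cycle (attacks q) c /\
    exists2 i, i < size c &
      strong_attack q (nth dummy_atom c i) (nth dummy_atom c (i.+1 %% size c)).

Definition attack_reach (q : query) : relation atom := clos_refl_trans atom (attacks q).

Definition strong_component (q : query) (S : seq atom) : Prop :=
  uniq S /\
  exists2 F0, F0 \in q &
    forall G, G \in S <-> [/\ G \in q, attack_reach q F0 G & attack_reach q G F0].

Definition initial_component (q : query) (S : seq atom) : Prop :=
  strong_component q S /\
  forall F G, F \in q -> F \notin S -> G \in S -> ~ attacks q F G.

Definition fresh_rel (q : query) : nat := (foldr maxn 0 (map rel q)).+1.

Definition Natom (q : query) (x : nat) : atom := mkAtom (fresh_rel q) 1 [:: inl x] false.

Definition attacks_var (q : query) (F : atom) (x : nat) : Prop :=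
  attacks (Natom q x :: q) F (Natom q x).

Definition sequential_proof (q : query) (Z : seq nat) (w : nat) (s : seq atom) : Prop :=
  [/\ all (mem q) s,
      forall i, i < size s ->
        {subset key (nth dummy_atom s i) <= Z ++ flatten (map vars (take i s))}
    & has (fun F => w \in vars F) s].

Definition internal (q : query) (Z : seq nat) (w : nat) : Prop :=
  (exists s, sequential_proof q Z w s /\
     forall F, F \in s -> forall x, x \in w :: Z -> ~ attacks_var q F x)
  /\ exists2 F, F \in q & {subset Z <= vars F}.

Definition saturated (q : query) : Prop :=
  forall Z w, internal q Z w -> fd_implies (K (qc q)) Z [:: w].

Definition Medge (q : query) (F G : atom) : Prop :=
  [/\ F \in q, G \in q, F != G & fd_implies (K (qc q)) (vars F) (key G)].

(* Main.v *)
Require Import Defs.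
From Stdlib Require Import Relations Classical.
From mathcomp Require Import all_boot.
Set Implicit Arguments.
Unset Strict Implicit.

Lemma fd_mono (Sigma Sigma' : seq fd) Z x :
  {subset Sigma <= Sigma'} -> fd_derives Sigma Z x -> fd_derives Sigma' Z x.
Proof.
move=> sub; elim => [y yZ|X Y y XY _ IH yY]; first exact: fdd_base.
exact: (fdd_step (sub _ XY) IH yY).
Qed.

Lemma key_sub_vars F : {subset key F <= vars F}.
Proof.
move=> x; rewrite /key /vars !mem_pmap => /mapP[y /mem_take yin ->].
exact: map_f.
Qed.

Lemma rel_fresh (q : query) H : H \in q -> Defs.rel H < fresh_rel q.
Proof.
rewrite /fresh_rel ltnS; elim: q => // a q IH; rewrite in_cons => /orP[/eqP -> | Hq] /=.
  exact: leq_maxl.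
exact: leq_trans (IH Hq) (leq_maxr _ _).
Qed.

Lemma N_notin (q : query) y : Natom q y \notin q.
Proof.
apply/negP => /rel_fresh; by rewrite /= ltnn.
Qed.

Lemma plus_lift (q : query) H y x : H \in q -> plus q H x -> plus (Natom q y :: q) H x.
Proof.
move=> Hq; apply: fd_mono => p pin.
have NH : Natom q y != H.
  by apply/eqP => e; move: (N_notin q y); rewrite e Hq.
by rewrite /= NH /= in_cons pin orbT.
Qed.

Lemma varsN (q : query) y : vars (Natom q y) = [:: y].
Proof. by []. Qed.

Lemma chain_lift (q : query) y H T : H \in q -> attack_chain (Natom q y :: q) H T ->
  attack_chain q H T \/
  (T = Natom q y /\ exists2 G, attack_chain q H G & y \in vars G /\ ~ plus q H y).
Proof.
move=> Hq; elim=> [|G T' x _ IH T'in xG xT' npl]; first by left; constructor.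
have npl' : ~ plus q H x := fun p => npl (plus_lift y Hq p).
case: IH => [ch | [eG [G0 ch0 [yG0 npy]]]].
- rewrite in_cons in T'in; case/orP: T'in => [/eqP eT | T'q].
  + right; split => //; exists G => //.
    move: xT'; rewrite eT varsN mem_seq1 => /eqP ex; subst x; by [].
  + by left; exact: ach_step ch T'q xG xT' npl'.
- move: xG; rewrite eG varsN mem_seq1 => /eqP ex; subst x.
  rewrite in_cons in T'in; case/orP: T'in => [/eqP eT | T'q].
  + by right; split => //; exists G0.
  + by left; exact: ach_step ch0 T'q yG0 xT' npy.
Qed.

Lemma attacks_var_attacks (q : query) H E y : H \in q -> E \in q -> H != E ->
  y \in vars E -> attacks_var q H y -> attacks q H E.
Proof.
move=> Hq Eq HE yE [_ _ _ ch].
case: (chain_lift Hq ch) => [ch' | [_ [G0 ch0 [yG0 npy]]]].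
- have inq : forall T, attack_chain q H T -> T \in q.
    by move=> T; elim => // G T' x _ _ T'q.
  by move: (N_notin q y); rewrite (inq _ ch').
- split => //; exact: ach_step ch0 Eq yG0 yE npy.
Qed.

Definition seqok (Z : seq nat) (s : seq atom) :=
  forall i, i < size s ->
    {subset key (nth dummy_atom s i) <= Z ++ flatten (map vars (take i s))}.

Lemma seqok_cat Z s1 s2 : seqok Z s1 -> seqok Z s2 -> seqok Z (s1 ++ s2).
Proof.
move=> h1 h2 i lt; rewrite nth_cat take_cat.
case: (ltnP i (size s1)) => [lt1 | ge] x xk; first exact: (h1 i lt1 x xk).
have lt2 : i - size s1 < size s2 by rewrite ltn_subLR // -size_cat.
have := h2 (i - size s1) lt2 x xk.
rewrite mem_cat => /orP[xZ|xt].
- by rewrite mem_cat xZ.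
- by rewrite mem_cat map_cat flatten_cat mem_cat xt !orbT.
Qed.

Lemma seqok_rcons Z s E : seqok Z s -> {subset key E <= Z ++ flatten (map vars s)} ->
  seqok Z (rcons s E).
Proof.
move=> hs hE i; rewrite -cats1 size_cat /= addn1 ltnS nth_cat take_cat.
rewrite leq_eqVlt => /orP[/eqP -> | lt]; last by rewrite lt; exact: (hs i lt).
by rewrite ltnn subnn take0 cats0.
Qed.

Lemma derive_seq (p : query) Z w : fd_derives (K p) Z w ->
  exists s, [/\ seqok Z s, all (mem p) s & w \in Z ++ flatten (map vars s)].
Proof.
elim=> [x xZ | X Y x XY _ IH xY].
  by exists [::]; split => //; rewrite cats0.
case/mapP: XY IH xY => E Ep [-> ->] IH xE.
have [s [ok al cov]] : exists s, [/\ seqok Z s, all (mem p) s &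
     {subset key E <= Z ++ flatten (map vars s)}].
  elim: (key E) IH => [|y Xs IHX] IH.
    by exists [::].
  have [s1 [ok1 al1 c1]] := IH y (mem_head _ _).
  have [s2 [ok2 al2 c2]] := IHX (fun z zX => IH z (mem_behead (s:=y :: Xs) zX)).
  exists (s1 ++ s2); split; first exact: seqok_cat.
    by rewrite all_cat al1 al2.
  move=> z; rewrite in_cons => /orP[/eqP -> | zX].
    move: c1; rewrite !mem_cat map_cat flatten_cat mem_cat => /orP[->|->] //.
    by rewrite orbT.
  move: (c2 z zX); rewrite !mem_cat map_cat flatten_cat mem_cat => /orP[->|->] //.
  by rewrite !orbT.
exists (rcons s E); split; first exact: seqok_rcons.
  by rewrite all_rcons; apply/andP; split.
by rewrite -cats1 map_cat flatten_cat /= cats0 !mem_cat xE !orbT.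
Qed.

Lemma rt1n_path (E : atom -> atom -> Prop) x y : clos_refl_trans_1n atom E x y ->
  exists l, (forall i, i < size l -> E (nth dummy_atom (x :: l) i) (nth dummy_atom l i))
            /\ last x l = y.
Proof.
elim=> [|a b c eab _ [l [hl hlast]]]; first by exists [::].
exists (b :: l); split => //; case=> [|i] //= lt; exact: hl.
Qed.

Lemma cycle_from (E : atom -> atom -> Prop) a b l : E a b ->
  (forall i, i < size l -> E (nth dummy_atom (b :: l) i) (nth dummy_atom l i)) ->
  last b l = a ->
  is_cycle E (b :: l) /\ nth dummy_atom (b :: l) (size l) = a.
Proof.
move=> eab hl hlast.
have hn : nth dummy_atom (b :: l) (size l) = a.
  by rewrite -hlast -[size l]/((size (b :: l)).-1) nth_last.
split=> //; split => // i; rewrite /= ltnS leq_eqVlt => /orP[/eqP -> | lt].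
  by rewrite modnn hn.
by rewrite modn_small ?ltnS //=; exact: hl.
Qed.

Lemma walk (E : atom -> atom -> Prop) (S : seq atom) :
  (forall G, G \in S -> exists2 F, F \in S & E G F) ->
  forall n G, G \in S -> exists w, [/\ size w = n.+1, nth dummy_atom w 0 = G,
     {subset w <= S} & forall i, i.+1 < size w -> E (nth dummy_atom w i) (nth dummy_atom w i.+1)].
Proof.
move=> hs; elim=> [|n IH] G GS.
  exists [:: G]; split => //; try by case.
  by move=> z; rewrite mem_seq1 => /eqP ->.
have [F FS eGF] := hs G GS.
have [w [sw w0 wS wE]] := IH F FS.
exists (G :: w); split => //=; first by rewrite sw.
  by move=> z; rewrite in_cons => /orP[/eqP -> | /wS].
case=> [|i] lt /=; first by rewrite w0.
exact: wE.
Qed.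

Lemma cycle_from_walk (E : atom -> atom -> Prop) (w : seq atom) :
  (forall i, i.+1 < size w -> E (nth dummy_atom w i) (nth dummy_atom w i.+1)) ->
  ~~ uniq w -> exists c, is_cycle E c /\ {subset c <= w}.
Proof.
move=> hw /(uniqPn dummy_atom)[i [j [lij ljs eij]]].
exists (take (j - i) (drop i w)); split; last first.
  by move=> z /mem_take /mem_drop.
have sz : size (take (j - i) (drop i w)) = j - i.
  rewrite size_take size_drop; case: ltnP => // h.
  apply/eqP; rewrite eqn_leq h /=; apply: leq_sub2r; exact: ltnW.
rewrite /is_cycle sz; split; first by rewrite subn_gt0.
move=> k lk; rewrite nth_take // nth_drop.
have lt1 : (i + k).+1 < size w.
  by apply: leq_ltn_trans ljs; rewrite -addnS -leq_subRL ?(ltnW lij).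
case: (ltnP k.+1 (j - i)) => [lk1 | ge].
  rewrite modn_small // nth_take // nth_drop addnS; exact: hw.
have ek : k.+1 = j - i by apply/eqP; rewrite eqn_leq lk ge.
rewrite ek modnn nth_take ?subn_gt0 // nth_drop addn0 eij.
have -> : j = (i + k).+1 by rewrite -addnS ek subnKC // ltnW.
exact: hw.
Qed.

Lemma closure_lemma (q : query) (S : seq atom) G v :
  fd_derives (K q) (key G) v ->
  fd_derives (K [seq X <- q | X \notin S]) (vars G) v \/
  exists E, [/\ E \in q, E \in S, E != G &
    forall u, u \in key E -> fd_derives (K [seq X <- q | X \notin S]) (vars G) u].
Proof.
elim=> [x xk | X Y x XY _ IH xY].
  by left; apply: fdd_base; exact: key_sub_vars.
case: (classic (exists E, [/\ E \in q, E \in S, E != G &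
    forall u, u \in key E -> fd_derives (K [seq X <- q | X \notin S]) (vars G) u])) => hex.
  by right.
have allX : forall y, y \in X -> fd_derives (K [seq X <- q | X \notin S]) (vars G) y.
  by move=> y yX; case: (IH y yX).
case/mapP: XY allX xY => E Eq [-> ->] allX xE.
case: (boolP (E \in S)) => ES.
  case: (eqVneq E G) => [eEG | nEG].
    by left; apply: fdd_base; rewrite -eEG.
  by exfalso; apply: hex; exists E.
left; apply: (fdd_step (X := key E) (Y := vars E)) => //.
by apply: map_f; rewrite mem_filter ES.
Qed.

Lemma subS (q : query) S : strong_component q S -> {subset S <= q}.
Proof. by case=> _ [F0 _ HS] G /HS[]. Qed.

Lemma weak_from_cycle (q : query) G H :
  ~ has_strong_cycle q -> attacks q G H -> attack_reach q H G ->
  fd_implies (K q) (key G) (key H).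
Proof.
move=> nsc aGH rHG; case: (classic (fd_implies (K q) (key G) (key H))) => // hn.
exfalso; apply: nsc.
have [l [hl hlast]] := rt1n_path (clos_rt_rt1n _ _ _ _ rHG).
have [cyc hn'] := cycle_from aGH hl hlast.
exists (H :: l); split => //; exists (size l) => //.
by rewrite hn' /= modnn /=.
Qed.

Lemma succ_exists (q : query) (S : seq atom) G :
  saturated q -> ~ has_strong_cycle q -> initial_component q S -> 2 <= size S ->
  G \in S -> exists2 F, F \in S & Medge q G F.
Proof.
move=> sat nsc [sc init] sz GS.
have sq := subS sc.
case: sc => uS [F0 F0q HS].
have [G' G'S nG'] : exists2 G', G' \in S & G' != G.
  have i0 : 0 < size S by apply: leq_trans sz.
  have i1 : 1 < size S by [].
  have d01 : nth dummy_atom S 0 != nth dummy_atom S 1 by rewrite nth_uniq.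
  case: (eqVneq (nth dummy_atom S 0) G) => [e0|n0].
    by exists (nth dummy_atom S 1); [exact: mem_nth | rewrite -e0 eq_sym].
  by exists (nth dummy_atom S 0); [exact: mem_nth | ].
have [_ rF0G rGF0] := (HS G).1 GS.
have [_ rF0G' rG'F0] := (HS G').1 G'S.
have rGG' : attack_reach q G G' := rt_trans _ _ _ _ _ rGF0 rF0G'.
have [z aGH1 rH1G'] : exists2 z, attacks q G z & clos_refl_trans_1n atom (attacks q) z G'.
  move: (clos_rt_rt1n _ _ _ _ rGG') nG'.
  case=> [|y z' a r] nn; first by rewrite eqxx in nn.
  by exists y.
have rH1 := clos_rt1n_rt _ _ _ _ rH1G'.
have H1q : z \in q by have [_ ? _ _] := aGH1.
have H1S : z \in S.
  apply/(HS z); split => //.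
    exact: rt_trans _ _ _ _ _ rF0G (rt_step _ _ _ _ aGH1).
  exact: rt_trans _ _ _ _ _ rH1 rG'F0.
have rH1G : attack_reach q z G := rt_trans _ _ _ _ _ (rt_trans _ _ _ _ _ rH1 rG'F0) rF0G.
have wk := weak_from_cycle nsc aGH1 rH1G.
pose Zs u := fd_derives (K [seq X <- q | X \notin S]) (vars G) u.
have [F [Fq FS nFG kF]] : exists F, [/\ F \in q, F \in S, F != G & forall u, u \in key F -> Zs u].
  case: (classic (exists E, [/\ E \in q, E \in S, E != G & forall u, u \in key E -> Zs u])) => [h|hex]; first exact: h.
  exists z; split => //; first by have [_ _ ? _] := aGH1; rewrite eq_sym.
  move=> u uk; case: (closure_lemma S (wk u uk)) => [hz|hE]; first exact: hz.
  by exfalso; apply: hex.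
exists F => //; split => //; first exact: sq; first by rewrite eq_sym.
move=> w wkF.
case: (boolP (w \in vars G)) => wG; first exact: fdd_base.
have [s [ok al cov]] := derive_seq (kF w wkF).
have hs : has (fun E => w \in vars E) s.
  move: cov; rewrite mem_cat (negbTE wG) /= => /flatten_mapP[E Es wE].
  by apply/hasP; exists E.
have sIn : forall E, E \in s -> E \in q /\ E \notin S.
  move=> E Es; have := allP al E Es; rewrite /= mem_filter => /andP[-> ->]; by [].
have int : internal q (vars G) w.
  split; last by exists G; [exact: sq |].
  exists s; split.
    split => //; apply/allP => E /sIn[]; by [].
  move=> E Es x; have [Eq nES] := sIn E Es.
  rewrite in_cons => /orP[/eqP -> | xG] av.
    have nEF : E != F by apply/eqP => e; move: nES; rewrite e FS.
    exact: (init E F Eq nES FS (attacks_var_attacks Eq Fq nEF (key_sub_vars wkF) av)).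
  have nEG : E != G by apply/eqP => e; move: nES; rewrite e GS.
  exact: (init E G Eq nES GS (attacks_var_attacks Eq (sq _ GS) nEG xG av)).
by apply: (sat _ _ int); rewrite mem_seq1.
Qed.

Theorem lemma11 (q : query) (S : seq atom) :
  sjf_query q ->
  saturated q ->
  ~ has_strong_cycle q ->
  initial_component q S ->
  2 <= size S ->
  exists c : seq atom, is_cycle (Medge q) c /\ {subset c <= S}.
Proof.
move=> _ sat nsc ini sz.
have hs : forall G, G \in S -> exists2 F, F \in S & Medge q G F.
  by move=> G GS; exact: succ_exists sat nsc ini sz GS.
have S0 : nth dummy_atom S 0 \in S by apply: mem_nth; exact: leq_trans sz.
have [w [sw _ wS wE]] := walk hs (size S) S0.
have nu : ~~ uniq w.
  apply/negP => uw; have := uniq_leq_size uw wS; by rewrite sw ltnn.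
have [c [cyc cw]] := cycle_from_walk wE nu.
by exists c; split => // z /cw /wS.
Qed.
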